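(* Let $d\ge2$ and let $R=(r_{ij})$ be a real $d\times d$ matrix with $r_{ii}=1$ for all $i$. Assume $R$ is not an $\mathcal S$-matrix, every principal sub-matrix of $R$ other than $R$ itself is completely-$\mathcal S$, and $\det R=0$. Then $R$ has rank $d-1$, there exists a column vector $U>0$ with $RU=0$, and there exists a row vector $a>0$ with $aR=0$.
   Context: $x>0$ (resp. $x\ge0$) means all entries positive (resp. non-negative). A square matrix $M$ is an $\mathcal S$-matrix if there exists a vector $x\ge0$ with $Mx>0$; it is completely-$\mathcal S$ if all its principal sub-matrices (sub-matrices $(m_{ij})_{i,j\in I}$ for non-empty index sets $I$, including the full set) are $\mathcal S$-matrices. *)

(* Defs.v *)
From mathcomp Require Import all_boot all_order all_algebra.
Set Implicit Arguments. Unset Strict Implicit. Unset Printing Implicit Defensive.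
Import Order.TTheory GRing.Theory Num.Theory.
Local Open Scope ring_scope.

Definition S_matrix (R : realFieldType) (n : nat) (M : 'M[R]_n) : Prop :=
  exists x : 'cV[R]_n, (forall i, 0 <= x i 0) /\ (forall i, 0 < (M *m x) i 0).

(* Principal submatrix of M on the index set I, indexed by 'I_#|I|
   (rows/columns listed in increasing order via enum_val). *)
Definition principal_submx (R : realFieldType) (n : nat) (I : {set 'I_n})
  (M : 'M[R]_n) : 'M[R]_#|I| :=
  \matrix_(i, j) M (enum_val i) (enum_val j).

Definition completely_S (R : realFieldType) (n : nat) (M : 'M[R]_n) : Prop :=
  forall I : {set 'I_n}, I != set0 -> S_matrix (principal_submx I M).

(* Main.v *)
Require Import Defs.
From mathcomp Require Import all_boot all_order all_algebra.
From mathcomp Require Import ring lra zify.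
Require Stdlib.Lists.List.
From Stdlib Require Import Classical_Prop.
Import Order.TTheory GRing.Theory Num.Theory.
Set Implicit Arguments. Unset Strict Implicit. Unset Printing Implicit Defensive.
Local Open Scope ring_scope.

Section Gordan.
Variable R : realFieldType.

Definition dot (n : nat) (a x : nat -> R) := \sum_(k < n) a k * x k.

Inductive cone (s : list (nat -> R)) : (nat -> R) -> Prop :=
| cone0 v : (forall i, v i = 0) -> cone s v
| coneS v w a c : cone s w -> List.In a s -> 0 <= c ->
    (forall i, v i = w i + c * a i) -> cone s v.

Lemma cone_ext s v w : cone s v -> (forall i, w i = v i) -> cone s w.
Proof.
move=> cv; elim: cv w => [v0 h0|v0 w0 a c cw IH Ha Hc Hv] w Hw.
  by apply: cone0 => i; rewrite Hw h0.
eapply coneS; [exact: cw|exact: Ha|exact: Hc|] => i; by rewrite Hw Hv.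
Qed.

Lemma cone_mem s a : List.In a s -> cone s a.
Proof.
move=> Ha; eapply coneS; [exact: (@cone0 _ (fun _ => 0))|exact: Ha|exact: ler01|].
by move=> i; rewrite add0r mul1r.
Qed.

Lemma cone_add s v w : cone s v -> cone s w -> cone s (fun i => v i + w i).
Proof.
move=> cv cw; elim: cw => [w0 h0|w0 w1 a c _ IH Ha Hc Hw].
  by apply: cone_ext cv _ => i; rewrite h0 addr0.
eapply coneS; [exact: IH|exact: Ha|exact: Hc|] => i.
by rewrite Hw addrA.
Qed.

Lemma cone_scale s v c : 0 <= c -> cone s v -> cone s (fun i => c * v i).
Proof.
move=> Hc cv; elim: cv => [v0 h0|v0 w0 a c' _ IH Ha Hc' Hv].
  by apply: cone0 => i; rewrite h0 mulr0.
eapply coneS; [exact: IH|exact: Ha|exact: (mulr_ge0 Hc Hc')|].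
by move=> i; rewrite Hv mulrDr mulrA.
Qed.

Lemma cone_sub s s' v : (forall b, List.In b s' -> cone s b) -> cone s' v -> cone s v.
Proof.
move=> Hs cv; elim: cv => [v0 h0|v0 w0 a c _ IH Ha Hc Hv].
  exact: cone0.
apply: cone_ext (cone_add IH (cone_scale Hc (Hs _ Ha))) _.
by move=> i; rewrite Hv.
Qed.

Lemma cone_zero s v k : (forall b, List.In b s -> b k = 0) -> cone s v -> v k = 0.
Proof.
move=> Hs cv; elim: cv => [v0 h0|v0 w0 a c _ IH Ha Hc Hv]; first exact: h0.
by rewrite Hv IH (Hs _ Ha) mulr0 addr0.
Qed.

Lemma dot_lin n (a b x : nat -> R) al be :
  dot n (fun i => al * a i + be * b i) x = al * dot n a x + be * dot n b x.
Proof.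
rewrite /dot !mulr_sumr -big_split /=; apply: eq_bigr => i _; ring.
Qed.

Lemma lower_pick (U : list R) : exists t, forall u, List.In u U -> t < u.
Proof.
elim: U => [|u U [t Ht]]; first by exists 0.
exists (Num.min t (u - 1)) => v [<-|Hv].
  by rewrite gt_min; apply/orP; right; lra.
by rewrite gt_min (Ht _ Hv).
Qed.

Lemma single_pick (l : R) (U : list R) : (forall u, List.In u U -> l < u) ->
  exists t, l < t /\ forall u, List.In u U -> t < u.
Proof.
elim: U => [|u U IH] H; first by exists (l + 1); split => //; lra.
have [t [Ht1 Ht2]] : exists t, l < t /\ forall u, List.In u U -> t < u.
  by apply: IH => v Hv; apply: H; right.
have Hu : l < u by apply: H; left.
exists (Num.min t ((l + u) / 2)); split.
  rewrite lt_min Ht1 /=; lra.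
move=> v [<-|Hv].
  by rewrite gt_min; apply/orP; right; lra.
by rewrite gt_min (Ht2 _ Hv).
Qed.

Lemma interval_pick (L U : list R) :
  (forall l u, List.In l L -> List.In u U -> l < u) ->
  exists t, (forall l, List.In l L -> l < t) /\ (forall u, List.In u U -> t < u).
Proof.
elim: L => [|l L IH] H.
  by have [t Ht] := lower_pick U; exists t; split.
have [t [Ht1 Ht2]] : exists t, (forall l, List.In l L -> l < t) /\ (forall u, List.In u U -> t < u).
  by apply: IH => l' u Hl Hu; apply: H => //; right.
have [t' [Ht1' Ht2']] := single_pick (U := U) (l := l) (fun u Hu => H l u (or_introl erefl) Hu).
exists (Num.max t t'); split.
  move=> v [<-|Hv]; rewrite lt_max; apply/orP; [by right|by left; apply: Ht1].
by move=> u Hu; rewrite gt_max Ht2 // Ht2'.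
Qed.


Definition comb (n : nat) (p q : nat -> R) : nat -> R :=
  fun i => (- q n) * p i + p n * q i.

Lemma dot_rec n (a x : nat -> R) : dot n.+1 a x = dot n a x + a n * x n.
Proof. by rewrite /dot big_ord_recr. Qed.

Lemma dot_ext n (a x y : nat -> R) : (forall k, (k < n)%N -> x k = y k) ->
  dot n a x = dot n a y.
Proof. by move=> H; apply: eq_bigr => k _; rewrite H. Qed.

Theorem gordan n : forall s : list (nat -> R),
  (exists x, forall a, List.In a s -> 0 < dot n a x) \/
  (exists a v, List.In a s /\ cone s v /\ forall k, (k < n)%N -> v k + a k = 0).
Proof.
elim: n => [|n IH] s.
  case: s => [|a s]; first by left; exists (fun _ => 0).
  right; exists a, (fun _ => 0); split; first by left.
  by split => //; apply: cone0.
pose P := List.filter (fun a : nat -> R => 0 < a n) s.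
pose N := List.filter (fun a : nat -> R => a n < 0) s.
pose Z := List.filter (fun a : nat -> R => a n == 0) s.
pose s' := Z ++ List.flat_map (fun p => List.map (comb n p) N) P.
have Hs' : forall b, List.In b s' ->
   (List.In b Z \/ exists p q, List.In p P /\ List.In q N /\ b = comb n p q).
  move=> b /List.in_app_iff [Hb|/List.in_flat_map [p [Hp /List.in_map_iff [q [Hq1 Hq2]]]]].
    by left.
  by right; exists p, q.
have Hcone : forall b, List.In b s' -> cone s b.
  move=> b /Hs' [/List.filter_In [Hb _]|[p [q [/List.filter_In [Hp Hp'] [/List.filter_In [Hq Hq'] ->]]]]].
    exact: cone_mem.
  have H1 : 0 <= - q n by rewrite oppr_ge0 ltW.
  have H2 : 0 <= p n by rewrite ltW.
  apply: cone_ext (cone_add (cone_scale H1 (cone_mem Hp)) (cone_scale H2 (cone_mem Hq))) _.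
  by move=> i.
have Hzero : forall b, List.In b s' -> b n = 0.
  move=> b /Hs' [/List.filter_In [Hb /eqP //]|[p [q [_ [_ ->]]]]].
  by rewrite /comb; ring.
have HinZ : forall a, List.In a s -> a n = 0 -> List.In a s'.
  by move=> a Ha Han; apply/List.in_app_iff; left; apply/List.filter_In; rewrite Han eqxx.
have Hcomb : forall p q, List.In p s -> List.In q s -> 0 < p n -> q n < 0 -> List.In (comb n p q) s'.
  move=> p q Hp Hq Hpn Hqn; apply/List.in_app_iff; right; apply/List.in_flat_map.
  exists p; split; first by apply/List.filter_In.
  by apply/List.in_map_iff; exists q; split => //; apply/List.filter_In.
case: (IH s') => [[x' Hx']|[b [v [Hb [Hv Hvb]]]]].
  pose L := List.map (fun p => - dot n p x' / p n) P.
  pose U := List.map (fun q => dot n q x' / (- q n)) N.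
  have [t [Ht1 Ht2]] : exists t, (forall l, List.In l L -> l < t) /\ (forall u, List.In u U -> t < u).
    apply: interval_pick => l u /List.in_map_iff [p [<- /List.filter_In [Hp Hpn]]].
    move=> /List.in_map_iff [q [<- /List.filter_In [Hq Hqn]]].
    have := Hx' _ (Hcomb p q Hp Hq Hpn Hqn); rewrite /comb dot_lin => H.
    set A := dot n p x' in H *; set B := dot n q x' in H *.
    set pn := p n in Hpn H *; set qn := q n in Hqn H *.
    have hq : 0 < - qn by lra.
    rewrite (ltr_pdivlMr _ _ hq).
    rewrite mulrAC ltr_pdivrMr //.
    nra.
  left; exists (fun i => if i == n then t else x' i) => a Ha.
  rewrite dot_rec eqxx (@dot_ext n a _ x'); last by move=> k Hk; rewrite ifN // neq_ltn Hk.
  case: (ltrgtP (a n) 0) => Han.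
  - have := Ht2 (dot n a x' / (- a n)); rewrite ltr_pdivlMr ?oppr_gt0 // => H.
    have {}H := H (List.in_map _ _ _ (proj2 (List.filter_In _ _ _) (conj Ha Han))).
    nra.
  - have := Ht1 (- dot n a x' / a n); rewrite ltr_pdivrMr // => H.
    have {}H := H (List.in_map _ _ _ (proj2 (List.filter_In _ _ _) (conj Ha Han))).
    nra.
  - by rewrite Han mul0r addr0; apply: Hx'; apply: HinZ.
have Hvn : v n = 0 by apply: (cone_zero Hzero Hv).
have Hbn : b n = 0 by apply: Hzero.
have Hall : forall k, (k < n.+1)%N -> v k + b k = 0.
  move=> k; rewrite ltnS leq_eqVlt => /orP [/eqP ->|Hk]; first by rewrite Hvn Hbn addr0.
  exact: Hvb.
right.
case/Hs': Hb => [/List.filter_In [Hb _]|[p [q [/List.filter_In [Hp Hpn] [/List.filter_In [Hq Hqn] Eb]]]]].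
  by exists b, v; split => //; split => //; apply: cone_sub Hcone Hv.
have Hqn' : 0 < - q n by rewrite oppr_gt0.
exists p, (fun i => (- q n)^-1 * v i + ((- q n)^-1 * p n) * q i); split => //; split.
  apply: cone_add; apply: cone_scale.
  - by rewrite invr_ge0 ltW.
  - exact: cone_sub Hcone Hv.
  - by rewrite mulr_ge0 // ?invr_ge0 ltW.
  exact: cone_mem.
move=> k Hk; have := Hall k Hk; rewrite Eb /comb => H.
have Hq0 : - q n != 0 by rewrite gt_eqF.
apply: (mulfI Hq0); rewrite mulr0 -{}H; field.
by rewrite -oppr_eq0.
Qed.


Lemma In_mem (T : eqType) (x : T) (s : seq T) : List.In x s <-> x \in s.
Proof.
elim: s => [|y s IH] //=; rewrite in_cons; split.
  by case=> [->|/IH ->]; rewrite ?eqxx ?orbT.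
by case/orP => [/eqP ->|/IH]; [left|right].
Qed.

Lemma sum_delta (d : nat) (i0 : 'I_d) (c : R) (F : 'I_d -> R) :
  \sum_i (if i == i0 then c else 0) * F i = c * F i0.
Proof.
rewrite (bigD1 i0) //= eqxx big1 ?addr0 // => i /negbTE ->; exact: mul0r.
Qed.

Section Mat.
Variable d : nat.

Definition ext (f : 'I_d -> R) : nat -> R :=
  fun k => if insub k is Some j then f j else 0.

Lemma extE f (j : 'I_d) : ext f j = f j.
Proof. by rewrite /ext valK. Qed.

Definition SK (A : 'M[R]_d) (K : {set 'I_d}) : Prop :=
  exists X : 'cV[R]_d, (forall j, 0 <= X j 0) /\ (forall j, j \notin K -> X j 0 = 0) /\
    (forall i, i \in K -> 0 < (A *m X) i 0).

Lemma ville (A : 'M[R]_d) (K : {set 'I_d}) : ~ SK A K ->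
  exists y : 'rV[R]_d, (forall i, 0 <= y 0 i) /\ (forall i, i \notin K -> y 0 i = 0) /\
    (exists i, y 0 i != 0) /\ (forall j, j \in K -> (y *m A) 0 j <= 0).
Proof.
move=> HnS.
pose rowK i := ext (fun j => if j \in K then A i j else 0).
pose unitK j := ext (fun j' => (j' == j)%:R).
pose s := List.map rowK (enum K) ++ List.map unitK (enum K).
have Hs : forall a, List.In a s -> (exists2 i, i \in K & a = rowK i) \/ (exists2 j, j \in K & a = unitK j).
  move=> a /List.in_app_iff [/List.in_map_iff [i [<- /In_mem]]|/List.in_map_iff [i [<- /In_mem]]].
    by rewrite mem_enum => Hi; left; exists i.
  by rewrite mem_enum => Hi; right; exists i.
have HrowK : forall i, i \in K -> List.In (rowK i) s.
  by move=> i Hi; apply/List.in_app_iff; left; apply: List.in_map; apply/In_mem; rewrite mem_enum.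
have HunitK : forall i, i \in K -> List.In (unitK i) s.
  by move=> i Hi; apply/List.in_app_iff; right; apply: List.in_map; apply/In_mem; rewrite mem_enum.
have dotE : forall (f : 'I_d -> R) x, dot d (ext f) x = \sum_j f j * x j.
  by move=> f x; apply: eq_bigr => j _; rewrite extE.
case: (gordan d s) => [[x Hx]|[a [v [Ha [Hv Hva]]]]].
  exfalso; apply: HnS.
  exists (\col_j (if j \in K then x j else 0)); split; [|split].
  - move=> j; rewrite mxE; case: ifP => Hj //.
    have := Hx _ (HunitK j Hj); rewrite dotE (eq_bigr (fun i => (if i == j then 1 else 0) * x i)).
      by rewrite sum_delta mul1r => /ltW.
    by move=> i _; case: eqP.
  - by move=> j /negbTE Hj; rewrite mxE Hj.
  move=> i Hi; have := Hx _ (HrowK i Hi); rewrite dotE mxE.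
  congr (0 < _); apply: eq_bigr => j _; rewrite mxE; case: ifP => _ //; by rewrite mulr0 mul0r.
have Hrep : exists y z : 'I_d -> R, (forall i, 0 <= y i) /\ (forall i, i \notin K -> y i = 0) /\
    (forall j, 0 <= z j) /\ (forall j, j \in K -> v j = \sum_i y i * A i j + z j).
  elim: Hv => [v0 h0|v0 w0 a0 c _ [y [z [Hy1 [Hy2 [Hz1 Hz2]]]]] Ha0 Hc Hv0].
    exists (fun _ => 0), (fun _ => 0); do 3 split => //.
    by move=> j _; rewrite h0 big1 ?addr0 // => i _; rewrite mul0r.
  case: (Hs _ Ha0) => [[i0 Hi0 Ea0]|[j0 Hj0 Ea0]]; rewrite {}Ea0 in Hv0.
    exists (fun i => y i + (if i == i0 then c else 0)), z; split; [|split; [|split]] => //.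
    - by move=> i; case: eqP => _; rewrite ?addr0 // addr_ge0.
    - by move=> i Hi; rewrite Hy2 //; case: eqP => [Ei|_]; [rewrite Ei Hi0 in Hi|rewrite addr0].
    move=> j Hj; rewrite Hv0 Hz2 // /rowK extE Hj.
    rewrite [X in _ = X + _](eq_bigr (fun i => y i * A i j + (if i == i0 then c else 0) * A i j)).
      by rewrite big_split /= sum_delta; ring.
    by move=> i _; rewrite mulrDl.
  exists y, (fun j => z j + (if j == j0 then c else 0)); split; [|split; [|split]] => //.
  - by move=> j; case: eqP => _; rewrite ?addr0 // addr_ge0.
  move=> j Hj; rewrite Hv0 Hz2 // /unitK extE.
  by case: eqP => _; rewrite ?mulr1 ?mulr0 ?addr0 // addrA.
have [y [z [Hy1 [Hy2 [Hz1 Hz2]]]]] := Hrep.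
case: (Hs _ Ha) => [[i0 Hi0 Ea]|[j0 Hj0 Ea]].
  exists (\row_i (y i + (i == i0)%:R)); split; [|split; [|split]].
  - by move=> i; rewrite mxE addr_ge0.
  - by move=> i Hi; rewrite mxE Hy2 //; case: eqP => [Ei|_]; [rewrite Ei Hi0 in Hi|rewrite addr0].
  - exists i0; rewrite mxE eqxx; apply: lt0r_neq0; apply: ltr_wpDl (Hy1 i0) _; exact: ltr01.
  move=> j Hj; have := Hva j (ltn_ord j); rewrite Hz2 // Ea /rowK extE Hj => H.
  rewrite mxE (eq_bigr (fun i => y i * A i j + (if i == i0 then 1 else 0) * A i j)).
    by rewrite big_split /= sum_delta; have := Hz1 j; lra.
  by move=> i _; rewrite mxE mulrDl; case: eqP.
exists (\row_i y i); split; [|split; [|split]].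
- by move=> i; rewrite mxE.
- by move=> i Hi; rewrite mxE Hy2.
- case: (boolP [exists i, y i != 0]) => [/existsP [i Hi]|/existsPn H].
    by exists i; rewrite mxE.
  exfalso; have := Hva j0 (ltn_ord j0); rewrite Hz2 // Ea /unitK extE eqxx big1.
    have := Hz1 j0; rewrite add0r => H1 H2.
    have : 0 < z j0 + true%:R by apply: ltr_wpDl H1 ltr01.
    by rewrite H2 ltxx.
  by move=> i _; have := H i; rewrite negbK => /eqP ->; rewrite mul0r.
move=> j Hj; have := Hva j (ltn_ord j); rewrite Hz2 // Ea /unitK extE => H.
rewrite mxE (eq_bigr (fun i => y i * A i j)); last by move=> i _; rewrite mxE.
have := Hz1 j; case: eqP H => _ /= H; rewrite ?mulr1n ?mulr0n in H; lra.
Qed.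


Lemma sum_pos (F : 'I_d -> R) j0 : (forall j, 0 <= F j) -> 0 < F j0 -> 0 < \sum_j F j.
Proof.
move=> H1 H2; rewrite (bigD1 j0) //=; apply: ltr_wpDr H2.
  by apply: sumr_ge0 => j _.
Qed.

Lemma exmax_seq (T : eqType) (f : T -> R) (s : seq T) x0 : x0 \in s ->
  exists k, k \in s /\ forall i, i \in s -> f i <= f k.
Proof.
elim: s x0 => [|x s IH] x0 //= _.
case: s IH => [|y s] IH.
  by exists x; split; rewrite ?mem_seq1 // => i; rewrite mem_seq1 => /eqP ->.
have [k [Hk1 Hk2]] := IH y (mem_head y s).
case: (leP (f x) (f k)) => Hfx.
  exists k; split; first by rewrite in_cons Hk1 orbT.
  by move=> i; rewrite in_cons => /orP [/eqP ->|/Hk2].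
exists x; split; first exact: mem_head.
move=> i; rewrite in_cons => /orP [/eqP ->//|/Hk2 H]; exact: le_trans H (ltW Hfx).
Qed.

Lemma exmax (L : {set 'I_d}) (f : 'I_d -> R) i0 : i0 \in L ->
  exists k, k \in L /\ forall i, i \in L -> f i <= f k.
Proof.
move=> Hi0; have Hs : i0 \in enum L by rewrite mem_enum.
have [k [Hk1 Hk2]] := @exmax_seq _ f (enum L) i0 Hs.
exists k; rewrite -mem_enum; split => // i Hi; apply: Hk2; by rewrite mem_enum.
Qed.

Lemma zc1 (L : {set 'I_d}) (y a : 'rV[R]_d) : (forall i, i \in L -> 0 < y 0 i) ->
  (exists i, i \in L /\ a 0 i < 0) ->
  exists t k, k \in L /\ y 0 k + t * a 0 k = 0 /\ forall i, i \in L -> 0 <= y 0 i + t * a 0 i.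
Proof.
move=> Hy [i0 [Hi0 Ha0]].
have [k [Hk1 Hk2]] := exmax (fun i => - a 0 i / y 0 i) Hi0.
have yk := Hy k Hk1.
have Hak : 0 < - a 0 k.
  have := Hk2 i0 Hi0; have : 0 < - a 0 i0 / y 0 i0.
    by rewrite divr_gt0 // ?oppr_gt0 // Hy.
  move=> H1 H2; have := lt_le_trans H1 H2; rewrite pmulr_lgt0 ?invr_gt0 //.
have Hak0 : a 0 k != 0 by rewrite -oppr_eq0 gt_eqF.
exists (y 0 k / (- a 0 k)), k; split => //; split; first by field.
move=> i Hi; have yi := Hy i Hi.
have H := ler_wpM2r (ltW (mulr_gt0 yi yk)) (Hk2 i Hi).
have E1 : - a 0 i / y 0 i * (y 0 i * y 0 k) = - a 0 i * y 0 k by field; rewrite gt_eqF.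
have E2 : - a 0 k / y 0 k * (y 0 i * y 0 k) = - a 0 k * y 0 i by field; rewrite gt_eqF.
rewrite /= E1 E2 in H.
have E3 : y 0 i + y 0 k / - a 0 k * a 0 i = ((- a 0 k) * y 0 i + y 0 k * a 0 i) / (- a 0 k).
  by field.
rewrite E3 divr_ge0 //; [lra|exact: ltW].
Qed.

Lemma zc (L : {set 'I_d}) (y a : 'rV[R]_d) : (forall i, i \in L -> 0 < y 0 i) ->
  (exists i, i \in L /\ a 0 i != 0) ->
  exists t k, k \in L /\ y 0 k + t * a 0 k = 0 /\ forall i, i \in L -> 0 <= y 0 i + t * a 0 i.
Proof.
move=> Hy [i0 [Hi0 Ha0]].
case: (ltrgt0P (a 0 i0)) Ha0 => Ha // _.
  have Hn : exists i, i \in L /\ (- a) 0 i < 0.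
    by exists i0; split => //; rewrite mxE oppr_lt0.
  have [t [k [H1 [H2 H3]]]] := @zc1 L y (- a) Hy Hn.
  exists (- t), k; split => //; split.
    by move: H2; rewrite mxE mulrN mulNr.
  by move=> i Hi; move: (H3 i Hi); rewrite mxE mulrN mulNr.
exact: zc1 Hy (ex_intro _ i0 (conj Hi0 Ha)).
Qed.

Lemma noS A K (y : 'rV[R]_d) : SK A K -> (forall i, 0 <= y 0 i) ->
  (forall i, i \notin K -> y 0 i = 0) -> (exists i, y 0 i != 0) ->
  (forall j, j \in K -> (y *m A) 0 j <= 0) -> False.
Proof.
move=> [X [HX1 [HX2 HX3]]] Hy1 Hy2 [i0 Hi0] Hy4.
have Ki0 : i0 \in K by apply: contraTT Hi0 => /Hy2 ->; rewrite eqxx.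
have e : (y *m A *m X) 0 0 = (y *m (A *m X)) 0 0 by rewrite mulmxA.
have h1 : (y *m A *m X) 0 0 <= 0.
  rewrite mxE; apply: sumr_le0 => j _.
  case: (boolP (j \in K)) => Hj; first by apply: mulr_le0_ge0; [apply: Hy4|].
  by rewrite HX2 // mulr0.
have h2 : 0 < (y *m (A *m X)) 0 0.
  rewrite mxE; apply: (sum_pos (j0 := i0)).
    move=> i; case: (boolP (i \in K)) => Hi; last by rewrite Hy2 // mul0r.
    by apply: mulr_ge0 => //; apply: ltW; apply: HX3.
  by apply: mulr_gt0; [rewrite lt0r Hi0 Hy1|apply: HX3].
by move: h1; rewrite e => h1; have := lt_le_trans h2 h1; rewrite ltxx.
Qed.


Lemma supp_pos (A : 'M[R]_d) (L : {set 'I_d}) (y : 'rV[R]_d) :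
  (forall L' : {set 'I_d}, L' \proper L -> L' != set0 -> SK A L') ->
  (forall i, 0 <= y 0 i) -> (forall i, i \notin L -> y 0 i = 0) -> (exists i, y 0 i != 0) ->
  (forall j, j \in L -> (y *m A) 0 j <= 0) -> forall i, i \in L -> 0 < y 0 i.
Proof.
move=> Hsub Hy1 Hy2 [i0 Hi0] Hy4 i Hi.
rewrite lt0r Hy1 andbT; apply/negP => /eqP Hyi.
pose L' := [set j | y 0 j != 0].
have HL'L : L' \subset L.
  by apply/subsetP => j; rewrite inE; apply: contraR => /Hy2 ->; rewrite eqxx.
have HL' : L' \proper L.
  by apply/properP; split => //; exists i => //; rewrite inE Hyi eqxx.
have HL'0 : L' != set0 by apply/set0Pn; exists i0; rewrite inE.
apply: (noS (Hsub _ HL' HL'0) Hy1 _ (ex_intro _ i0 Hi0)).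
  by move=> j; rewrite inE negbK => /eqP.
by move=> j Hj; apply: Hy4; apply: (subsetP HL'L).
Qed.

Lemma nz_row (v : 'rV[R]_d) : v != 0 -> exists i, v 0 i != 0.
Proof.
move=> Hv; case: (boolP [exists i, v 0 i != 0]) => [/existsP //|/existsPn H].
case/negP: Hv; apply/eqP/rowP => i; rewrite mxE; by move: (H i); rewrite negbK => /eqP.
Qed.

Lemma TL (A : 'M[R]_d) (L : {set 'I_d}) : L != set0 -> (forall L' : {set 'I_d}, L' \proper L -> L' != set0 -> SK A L') ->
  ~ SK A L -> ~ SK A^T L.
Proof.
move=> HL Hsub HnS [X [HX1 [HX2 HX3]]].
have [y [Hy1 [Hy2 [Hy3 Hy4]]]] := ville HnS.
have ypos := supp_pos Hsub Hy1 Hy2 Hy3 Hy4.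
have [j0 Hj0] := set0Pn _ HL.
have EX : forall j, (X^T *m A) 0 j = (A^T *m X) j 0.
  by move=> j; rewrite !mxE; apply: eq_bigr => i _; rewrite !mxE mulrC.
have HXnz : exists i, i \in L /\ X^T 0 i != 0.
  case: (boolP [exists i, (i \in L) && (X i 0 != 0)]) => [/existsP [i /andP [H1 H2]]|/existsPn H].
    by exists i; rewrite mxE.
  have : X = 0.
    apply/matrixP => i j; rewrite (ord1 j) mxE; case: (boolP (i \in L)) => Hi.
      by move: (H i); rewrite Hi /= negbK => /eqP.
    exact: HX2.
  by move=> EX0; move: (HX3 j0 Hj0); rewrite EX0 mulmx0 mxE ltxx.
have [t [k [Hk1 [Hk2 Hk3]]]] := zc ypos HXnz.
have ht : t < 0.
  rewrite ltNge; apply/negP => ht; move: Hk2; have := ypos k Hk1.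
  rewrite mxE; have := HX1 k; move=> H1 H2 H3; have : 0 <= t * X k 0 by apply: mulr_ge0.
  lra.
pose v := y + t *: X^T.
have vE : forall i, v 0 i = y 0 i + t * X i 0 by move=> i; rewrite !mxE.
have vA : forall j, j \in L -> (v *m A) 0 j < 0.
  move=> j Hj; rewrite mulmxDl -scalemxAl [X in X < 0]mxE [X in _ + X < 0]mxE EX.
  have H1 := Hy4 j Hj; have H2 := HX3 j Hj; nra.
have vnz : exists i, v 0 i != 0.
  apply: nz_row; apply/negP => /eqP v0; have := vA j0 Hj0; by rewrite v0 mul0mx mxE ltxx.
have [i0 Hi0] := vnz.
pose L' := [set j | v 0 j != 0].
have HL'L : L' \subset L.
  apply/subsetP => j; rewrite inE; apply: contraR => Hj.
  by rewrite vE Hy2 // HX2 // mulr0 addr0.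
have HL' : L' \proper L.
  apply/properP; split => //; exists k => //; rewrite inE vE.
  by move: Hk2; rewrite mxE => ->; rewrite eqxx.
have HL'0 : L' != set0 by apply/set0Pn; exists i0; rewrite inE.
apply: (noS (Hsub _ HL' HL'0) (y := v) _ _ vnz).
- move=> i; case: (boolP (i \in L)) => Hi.
    by move: (Hk3 i Hi); rewrite mxE vE.
  by rewrite vE Hy2 // HX2 // mulr0 addr0.
- by move=> j; rewrite inE negbK => /eqP.
by move=> j Hj; apply: ltW; apply: vA; apply: (subsetP HL'L).
Qed.


Lemma TT n (A : 'M[R]_d) : forall L : {set 'I_d}, (#|L| <= n)%N ->
  (forall L' : {set 'I_d}, L' \subset L -> L' != set0 -> SK A L') ->
  forall L' : {set 'I_d}, L' \subset L -> L' != set0 -> SK A^T L'.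
Proof.
elim: n => [|n IH] L HLn Hsub L' HL'L HL'0.
  have [x Hx] := set0Pn _ HL'0.
  have : (0 < #|L|)%N by apply/card_gt0P; exists x; apply: (subsetP HL'L).
  by rewrite leqn0 in HLn; rewrite (eqP HLn).
case: (classic (SK A^T L')) => // H; exfalso.
have Hsub' : forall L'' : {set 'I_d}, L'' \proper L' -> L'' != set0 -> SK A^T L''.
  move=> L'' HL'' HL''0; apply: (IH L'') => //.
  - have := proper_card HL''; have := subset_leq_card HL'L; lia.
  - move=> L1 HL1 HL10; apply: Hsub => //.
    exact: subset_trans HL1 (subset_trans (proper_sub HL'') HL'L).
have := TL HL'0 Hsub' H; rewrite trmxK; apply; exact: Hsub.
Qed.

End Mat.

Lemma SK_of_S (d : nat) (A : 'M[R]_d) (K : {set 'I_d}) :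
  S_matrix (principal_submx K A) -> SK A K.
Proof.
move=> [x [Hx1 Hx2]].
exists (\col_j \sum_k ((enum_val k == j)%:R * x k 0)); split; [|split].
- by move=> j; rewrite mxE; apply: sumr_ge0 => k _; apply: mulr_ge0.
- move=> j Hj; rewrite mxE big1 // => k _.
  have : enum_val k != j by apply: contraNneq Hj => <-; exact: enum_valP.
  by move=> /negbTE ->; rewrite mul0r.
move=> i Hi; have := Hx2 (enum_rank_in Hi i); rewrite /principal_submx !mxE.
move=> H; apply: (lt_le_trans H); rewrite le_eqVlt; apply/orP; left; apply/eqP.
rewrite (eq_bigr (fun j => \sum_k A i j * ((enum_val k == j)%:R * x k 0))); last first.
  by move=> j _; rewrite mxE mulr_sumr.
rewrite exchange_big /=; apply: eq_bigr => k _; rewrite mxE (enum_rankK_in Hi Hi).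
rewrite (bigD1 (enum_val k)) //= eqxx big1 ?addr0; first by rewrite mul1r.
by move=> j; rewrite eq_sym => /negbTE ->; rewrite mul0r mulr0.
Qed.

Lemma S_of_SK (d : nat) (A : 'M[R]_d) : SK A setT -> S_matrix A.
Proof. by move=> [X [H1 [_ H3]]]; exists X; split => // i; apply: H3; rewrite inE. Qed.

End Gordan.

Lemma trE (R : realFieldType) (d : nat) (A : 'M[R]_d) (X : 'cV[R]_d) j :
  (X^T *m A) 0 j = (A^T *m X) j 0.
Proof. by rewrite !mxE; apply: eq_bigr => i _; rewrite !mxE mulrC. Qed.

Theorem lemma2 (R : realFieldType) (d : nat) (Hd : (2 <= d)%N) (M : 'M[R]_d)
  (Hdiag : forall i, M i i = 1)
  (HnotS : ~ S_matrix M)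
  (Hsub : forall I : {set 'I_d}, I != set0 -> I != setT ->
            completely_S (principal_submx I M))
  (Hdet : \det M = 0) :
  \rank M = d.-1 /\
  (exists U : 'cV[R]_d, (forall i, 0 < U i 0) /\ M *m U = 0) /\
  (exists a : 'rV[R]_d, (forall j, 0 < a 0 j) /\ a *m M = 0).
Proof.
have HSK : forall K : {set 'I_d}, K != set0 -> K != setT -> SK M K.
  move=> K HK0 HKT; have hK : (0 < #|K|)%N by rewrite card_gt0.
  apply: SK_of_S; apply: S_of_SK; apply: SK_of_S; apply: Hsub => //.
  by apply/set0Pn; exists (Ordinal hK); rewrite inE.
have HnSK : ~ SK M setT by move/S_of_SK.
have Hprop : forall L' : {set 'I_d}, L' \proper setT -> L' != set0 -> SK M L'.
  by move=> L' HL' HL'0; apply: HSK => //; move: HL'; rewrite properEneq => /andP [].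
have hd : (0 < d)%N by lia.
have HT0 : (setT : {set 'I_d}) != set0 by apply/set0Pn; exists (Ordinal hd); rewrite inE.
have [y [Hy1 [Hy2 [Hy3 Hy4]]]] := ville HnSK.
have ypos : forall i, 0 < y 0 i.
  by move=> i; apply: (supp_pos Hprop Hy1 Hy2 Hy3 Hy4); rewrite inE.
have ker : forall a : 'rV[R]_d, a *m M = 0 -> (exists i, a 0 i != 0) -> exists t, y = t *: a.
  move=> a Ha [i1 Hi1].
  have Hnz' : exists i, i \in setT /\ a 0 i != 0 by exists i1; rewrite inE.
  have [t [k [Hk1 [Hk2 Hk3]]]] := zc (L := setT) (y := y) (fun i _ => ypos i) Hnz'.
  pose y' := y + t *: a.
  have y'E : forall i, y' 0 i = y 0 i + t * a 0 i by move=> i; rewrite !mxE.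
  case: (boolP [exists i, y' 0 i != 0]) => [/existsP [i0 Hi0]|/existsPn H].
    exfalso.
    pose L' := [set j | y' 0 j != 0].
    have HL'0 : L' != set0 by apply/set0Pn; exists i0; rewrite inE.
    have HL'T : L' != setT.
      apply/negP => /eqP E; have : k \in L' by rewrite E inE.
      by rewrite inE y'E Hk2 eqxx.
    apply: (noS (HSK _ HL'0 HL'T) (y := y')).
    - by move=> i; rewrite y'E; apply: Hk3; rewrite inE.
    - by move=> j; rewrite inE negbK => /eqP.
    - by exists i0.
    move=> j _; rewrite mulmxDl -scalemxAl Ha scaler0 addr0; by apply: Hy4; rewrite inE.
  exists (- t); apply/rowP => i; have := H i; rewrite negbK y'E !mxE => /eqP E.
  rewrite mulNr; lra.
have yM0 : y *m M = 0.
  have /det0P [a Ha0 HaM] : \det M == 0 by rewrite Hdet.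
  by have [t ->] := ker a HaM (nz_row Ha0); rewrite -scalemxAl HaM scaler0.
split.
  have Hk : (kermx M <= y)%MS.
    apply/row_subP => i; set r := row i (kermx M).
    have rM : r *m M = 0 by rewrite /r -row_mul mulmx_ker row0.
    case: (eqVneq r 0) => [->|rnz]; first exact: sub0mx.
    have [t Et] := ker r rM (nz_row rnz).
    have t0 : t != 0.
      by apply/negP => /eqP t0; have := ypos i; rewrite Et t0 scale0r mxE ltxx.
    have -> : r = t^-1 *: y by rewrite Et scalerA mulVf // scale1r.
    by apply: scalemx_sub; exact: submx_refl.
  have := mxrankS Hk; rewrite mxrank_ker => H1.
  have H2 := rank_leq_row y; have H3 := rank_leq_row M.
  have H4 : \rank M != d.
    apply/negP => /eqP E; have : row_free M by rewrite /row_free E.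
    by rewrite row_free_unit unitmxE Hdet unitr0.
  lia.
split; last by exists y; split.
have HnT : ~ SK M^T setT := TL HT0 Hprop HnSK.
have [u [Hu1 [_ [Hu3 Hu4]]]] := ville HnT.
have EU : M *m u^T = (u *m M^T)^T by rewrite trmx_mul trmxK.
have Hle : forall i, (M *m u^T) i 0 <= 0.
  by move=> i'; rewrite EU mxE; apply: Hu4; rewrite inE.
have MU : M *m u^T = 0.
  apply/matrixP => i jj; rewrite (ord1 jj) [RHS]mxE.
  apply/eqP; rewrite eq_le Hle /= leNgt; apply/negP => Hlt.
  have : (y *m (M *m u^T)) 0 0 = 0 by rewrite mulmxA yM0 mul0mx mxE.
  rewrite mxE => Hs.
  have : 0 < - \sum_j y 0 j * (M *m u^T) j 0.
    rewrite -sumrN; apply: (sum_pos (j0 := i)).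
      by move=> j; rewrite oppr_ge0; apply: mulr_ge0_le0 (ltW (ypos j)) (Hle j).
    by rewrite oppr_gt0 pmulr_rlt0.
  by rewrite Hs oppr0 ltxx.
exists u^T; split => //.
move=> i; rewrite mxE lt0r Hu1 andbT; apply/negP => /eqP Hui.
have [i1 Hi1] := Hu3.
pose K := [set j | u 0 j != 0].
have HK0 : K != set0 by apply/set0Pn; exists i1; rewrite inE.
have HK : forall L' : {set 'I_d}, L' \subset K -> L' != set0 -> SK M L'.
  move=> L' HL' HL'0; apply: HSK => //; apply/negP => /eqP E.
  have : i \in L' by rewrite E inE.
  by move/(subsetP HL'); rewrite inE Hui eqxx.
have [X [HX1 [HX2 HX3]]] := TT (leqnn #|K|) HK (subxx K) HK0.
have : (X^T *m (M *m u^T)) 0 0 = 0 by rewrite MU mulmx0 mxE.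
rewrite mulmxA mxE => Hs.
have : 0 < \sum_j (X^T *m M) 0 j * u^T j 0.
  apply: (sum_pos (j0 := i1)).
    move=> j; rewrite [u^T _ _]mxE; case: (boolP (j \in K)) => Hj.
      by apply: mulr_ge0 => //; rewrite trE; apply: ltW; apply: HX3.
    by move: Hj; rewrite inE negbK => /eqP ->; rewrite mulr0.
  have Ki1 : i1 \in K by rewrite inE.
  rewrite [u^T _ _]mxE trE; apply: mulr_gt0; first exact: HX3.
  by rewrite lt0r Hi1 Hu1.
by rewrite Hs ltxx.
Qed.
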